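(* For every $\theta=(\theta_1,\theta_2)\in\Theta$ and each $i\in\{1,2\}$, the smallest PSNE Pareto dominates the largest PSNE of $\mathcal{G}_\theta$: $$c_i\big(\theta_i,\underline{\mathbf a}^*(\theta)\big)\le c_i\big(\theta_i,\overline{\mathbf a}^*(\theta)\big).$$
   Context: Fix an integer $A_m\ge 1$, a weight $w>0$, and for $i\in\{1,2\}$ a finite set $\Theta_i\subset(0,\infty)$ of SNR values; let $\Theta=\Theta_1\times\Theta_2$, and write $-i$ for the index in $\{1,2\}\setminus\{i\}$. Let $c_e:(0,\infty)\times\{0,\dots,A_m\}\to\mathbb{R}_{+}$ be an arbitrary function. For each $\theta=(\theta_1,\theta_2)\in\Theta$, the two-player game $\mathcal{G}_\theta$ has strategy sets $\mathcal{A}_1=\mathcal{A}_2=\{0,1,\dots,A_m\}$ (profiles $\mathbf a=(a_1,a_2)$ ordered componentwise) and player $i$ minimizes the cost $$c_i(\theta_i,a_i,a_{-i})=w\,c_e(\theta_i,a_i)+\frac{1}{a_i+1}+\frac{a_{-i}}{a_i+1}.$$ A profile $\mathbf a^*$ is a pure strategy Nash equilibrium (PSNE) of $\mathcal{G}_\theta$ if $c_i(\theta_i,a_i^*,a_{-i}^* )\le c_i(\theta_i,a_i,a_{-i}^* )$ for all $i$ and all $a_i\in\mathcal{A}_i$. The set of PSNEs of $\mathcal{G}_\theta$ has a componentwise largest element $\overline{\mathbf a}^*(\theta)$ and a componentwise smallest element $\underline{\mathbf a}^*(\theta)$; $c_i(\theta_i,\mathbf a)$ means $c_i(\theta_i,a_i,a_{-i})$.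 *)

(* Defs.v *)
From Stdlib Require Import Reals List.
Open Scope R_scope.

Definition cost (w : R) (ce : R -> nat -> R) (th : R) (ai aj : nat) : R :=
  w * ce th ai + 1 / (INR ai + 1) + INR aj / (INR ai + 1).

Definition is_PSNE (Am : nat) (w : R) (ce : R -> nat -> R) (th1 th2 : R)
  (a1 a2 : nat) : Prop :=
  (a1 <= Am)%nat /\ (a2 <= Am)%nat /\
  (forall b : nat, (b <= Am)%nat -> cost w ce th1 a1 a2 <= cost w ce th1 b a2) /\
  (forall b : nat, (b <= Am)%nat -> cost w ce th2 a2 a1 <= cost w ce th2 b a1).

(* Main.v *)
Require Import Defs.
From Stdlib Require Import Reals List Lra.
Open Scope R_scope.

Theorem theorem2
  (Am : nat) (hAm : (1 <= Am)%nat) (w : R) (hw : 0 < w)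
  (Theta1 Theta2 : list R)
  (hT1 : forall t, In t Theta1 -> 0 < t) (hT2 : forall t, In t Theta2 -> 0 < t)
  (ce : R -> nat -> R)
  (hce : forall t a, 0 < t -> (a <= Am)%nat -> 0 <= ce t a)
  (th1 th2 : R) (hth1 : In th1 Theta1) (hth2 : In th2 Theta2)
  (l1 l2 u1 u2 : nat)
  (hl : is_PSNE Am w ce th1 th2 l1 l2)
  (hl_min : forall b1 b2, is_PSNE Am w ce th1 th2 b1 b2 -> (l1 <= b1)%nat /\ (l2 <= b2)%nat)
  (hu : is_PSNE Am w ce th1 th2 u1 u2)
  (hu_max : forall b1 b2, is_PSNE Am w ce th1 th2 b1 b2 -> (b1 <= u1)%nat /\ (b2 <= u2)%nat) :
  cost w ce th1 l1 l2 <= cost w ce th1 u1 u2 /\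
  cost w ce th2 l2 l1 <= cost w ce th2 u2 u1.
Proof.
  destruct (hl_min u1 u2 hu) as [h1 h2].
  destruct hl as [hl1 [hl2 [hb1 hb2]]].
  destruct hu as [hu1 [hu2 _]].
  assert (mono : forall th a x y, (x <= y)%nat ->
    cost w ce th a x <= cost w ce th a y).
  { intros th a x y hxy. unfold cost.
    apply le_INR in hxy. assert (0 <= INR a) by apply pos_INR.
    apply Rplus_le_compat_l. unfold Rdiv.
    apply Rmult_le_compat_r; [|exact hxy].
    left; apply Rinv_0_lt_compat; lra. }
  split.
  - eapply Rle_trans; [apply hb1; exact hu1| apply mono; exact h2].
  - eapply Rle_trans; [apply hb2; exact hu2| apply mono; exact h1].
Qed.
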